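(* Let $D$ be a strongly connected digraph with $m\ge 3$ arcs. Then $rc^*(D)=src^*(D)=m$ if and only if $D$ is the directed cycle $\overrightarrow{C_m}$ of length $m$.
   Context: Digraphs are finite without loops or multiple arcs. For a strongly connected digraph $D$ and an arc-colouring $\Gamma:A(D)\to\{1,\dots,k\}$, a directed path is rainbow if its arcs have pairwise distinct colours. $\Gamma$ is rainbow connected if for every ordered pair of distinct vertices $x,y$ there is a rainbow directed $xy$-path; $rc^*(D)$ is the minimum $k$ admitting such a colouring. $\Gamma$ is strongly rainbow connected if for every ordered pair of distinct vertices $x,y$ there is a rainbow directed $xy$-path of length $d_D(x,y)$; $src^*(D)$ is the minimum such $k$. *)

(* Defs.v *)
From mathcomp Require Import all_boot.
Set Implicit Arguments. Unset Strict Implicit. Unset Printing Implicit Defensive.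

(* A digraph on a finite vertex type T is an arc relation r : rel T without
   loops (irreflexive); multiple arcs are impossible by construction. *)
Definition loopless (T : finType) (r : rel T) : Prop := irreflexive r.

Definition arcs (T : finType) (r : rel T) : {set T * T} :=
  [set a | r a.1 a.2].
Definition num_arcs (T : finType) (r : rel T) : nat := #|arcs r|.

Definition strongly_connected (T : finType) (r : rel T) : Prop :=
  forall x y : T, connect r x y.

(* A directed x-y path: vertex sequence x :: p with consecutive arcs,
   ending at y, pairwise distinct vertices. Its length is size p. *)
Definition dpath (T : finType) (r : rel T) (x y : T) (p : seq T) : bool :=
  [&& path r x p, last x p == y & uniq (x :: p)].

Definition dwalk (T : finType) (r : rel T) (x y : T) (p : seq T) : bool :=
  path r x p && (last x p == y).

Definition arc_colours (T : finType) (c : T -> T -> nat) (x : T) (p : seq T)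
  : seq nat := pairmap c x p.

Definition rainbow (T : finType) (c : T -> T -> nat) (x : T) (p : seq T)
  : bool := uniq (arc_colours c x p).

Definition colouring (T : finType) (r : rel T) (k : nat) (c : T -> T -> nat)
  : Prop := forall x y, r x y -> 0 < c x y <= k.

Definition rainbow_connected (T : finType) (r : rel T) (c : T -> T -> nat)
  : Prop :=
  forall x y : T, x != y -> exists p, dpath r x y p && rainbow c x p.

Definition geodesic (T : finType) (r : rel T) (x y : T) (p : seq T) : Prop :=
  dpath r x y p /\ forall q, dwalk r x y q -> size p <= size q.

Definition strongly_rainbow_connected (T : finType) (r : rel T)
  (c : T -> T -> nat) : Prop :=
  forall x y : T, x != y -> exists p, geodesic r x y p /\ rainbow c x p.

(* rc*(D) = k, i.e. k is the minimum number of colours of a rainbow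
   connected colouring. *)
Definition rc_eq (T : finType) (r : rel T) (k : nat) : Prop :=
  (exists c, colouring r k c /\ rainbow_connected r c) /\
  (forall k' c, k' < k -> colouring r k' c -> ~ rainbow_connected r c).

Definition src_eq (T : finType) (r : rel T) (k : nat) : Prop :=
  (exists c, colouring r k c /\ strongly_rainbow_connected r c) /\
  (forall k' c, k' < k -> colouring r k' c -> ~ strongly_rainbow_connected r c).

Definition is_directed_cycle (T : finType) (r : rel T) (m : nat) : Prop :=
  exists f : T -> 'I_m, bijective f /\
    forall x y, r x y = (val (f y) == (val (f x)).+1 %% m).

(* Main.v *)
Require Import Defs.
From mathcomp Require Import all_boot.
Set Implicit Arguments. Unset Strict Implicit. Unset Printing Implicit Defensive.

Lemma mem_pairmap_arc (T : finType) (r : rel T) (c : T -> T -> nat) x p z :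
  path r x p -> z \in pairmap c x p -> exists u w, [/\ r u w, w \in p & z = c u w].
Proof.
elim: p x => [|y p IH] x //= /andP[rxy pp]; rewrite inE => /orP[/eqP->|zin].
  by exists x, y; rewrite mem_head.
have [u [w [ruw wp ->]]] := IH _ pp zin.
by exists u, w; rewrite inE wp orbT.
Qed.

Lemma rainbow_headinj (T : finType) (r : rel T) (c : T -> T -> nat) x p :
  path r x p -> uniq p ->
  (forall x1 y1 x2 y2, r x1 y1 -> r x2 y2 -> c x1 y1 = c x2 y2 -> y1 = y2) ->
  uniq (pairmap c x p).
Proof.
move=> + + H; elim: p x => [|y p IH] x //= /andP[rxy pp] /andP[yp up].
rewrite IH // andbT; apply/negP => /(mem_pairmap_arc pp) [u [w [ruw wp e]]].
by rewrite (H _ _ _ _ rxy ruw e) wp in yp.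
Qed.

Lemma exists_dpath (T : finType) (r : rel T) x y :
  connect r x y -> exists p, dpath r x y p.
Proof.
move=> /connectP[p pp ->]; case: (shortenP pp) => p' pp' up' _.
by exists p'; rewrite /dpath pp' up' eqxx.
Qed.

Lemma rc_card (T : finType) (r : rel T) m :
  strongly_connected r -> rc_eq r m -> m <= #|T|.
Proof.
move=> sc [_ H]; rewrite leqNgt; apply/negP => lt.
apply: (H #|T| (fun x y => (index y (enum T)).+1) lt).
  by move=> x y _; rewrite ltnS cardT index_mem mem_enum.
move=> x y nxy; have [p dp] := exists_dpath (sc x y).
exists p; rewrite dp /rainbow /arc_colours.
move: dp => /and3P[pp _ /andP[_ up]].
apply: rainbow_headinj pp up _ => x1 y1 x2 y2 _ _ [e].
by rewrite -(nth_index y1 (mem_enum T y1)) e nth_index // mem_enum.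
Qed.

Lemma out_arc (T : finType) (r : rel T) x y :
  connect r x y -> x != y -> exists z, r x z.
Proof.
move=> /connectP[[|z p] /= pp ->]; first by rewrite eqxx.
by move: pp => /andP[rxz _] _; exists z.
Qed.

Lemma in_arc (T : finType) (r : rel T) x y :
  connect r x y -> x != y -> exists z, r z y.
Proof.
move=> /connectP[p pp ->] ne; case/lastP: p pp ne => [|p z]; first by rewrite eqxx.
rewrite rcons_path last_rcons => /andP[_ rz] _; by exists (last x p).
Qed.

Lemma other (T : finType) (x : T) : 1 < #|T| -> exists y, x != y.
Proof.
move=> h; case: (pickP (fun y => x != y)) => [y hy|h0]; first by exists y.
suff: #|T| <= 1 by rewrite leqNgt h.
rewrite -(card1 x); apply: subset_leq_card; apply/subsetP => y _.
by move: (h0 y) => /= /negbFE; rewrite eq_sym.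
Qed.

Lemma cycle_of (T : finType) (r : rel T) m :
  strongly_connected r -> num_arcs r = m -> 3 <= m -> m <= #|T| ->
  is_directed_cycle r m.
Proof.
move=> sc na m3 mT.
have outx : forall x, exists z, r x z.
  move=> x; have [y xy] := other x (leq_trans (isT : 1 < 3) (leq_trans m3 mT)).
  exact: out_arc (sc x y) xy.
pose s x := odflt x [pick z | r x z].
have rs : forall x, r x (s x).
  move=> x; rewrite /s; case: pickP => [z //|h]; have [z rz] := outx x.
  by rewrite h in rz.
pose S := [set (x, s x) | x : T].
have cS : #|S| = #|T|.
  by rewrite card_imset //; move=> a b [].
have SA : S = arcs r.
  apply/eqP; rewrite eqEcard; apply/andP; split.
    by apply/subsetP => a /imsetP[x _ ->]; rewrite inE /= rs.
  by rewrite cS -/(num_arcs r) na.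
have nT : #|T| = m by rewrite -cS SA.
have rE : forall x y, r x y = (y == s x).
  move=> x y; apply/idP/eqP => [rxy|->//].
  have : (x, y) \in arcs r by rewrite inE.
  by rewrite -SA => /imsetP[z _ [-> ->]].
have [x0 _] : exists x0 : T, true.
  case: (pickP (@predT T)) => [x _|h]; first by exists x.
  have T0 : #|T| = 0 by apply: eq_card0 => y; have := h y.
  by rewrite T0 leqn0 in mT; rewrite (eqP mT) in m3.
have fc : forall y, fconnect s x0 y.
  move=> y; rewrite -(@eq_connect _ r); first exact: sc. by move=> a b; rewrite rE eq_sym.
have ord : order s x0 = m.
  rewrite /order -nT; apply: eq_card => w; rewrite inE; exact: fc.
have fm : forall y, findex s x0 y < m by move=> y; rewrite -ord findex_max.
have finj : forall y y', findex s x0 y = findex s x0 y' -> y = y'.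
  by move=> y y' e; rewrite -(iter_findex (fc y)) e iter_findex.
have itm : iter m s x0 = x0.
  have [y xy] := other x0 (leq_trans (isT : 1 < 3) (leq_trans m3 mT)).
  rewrite eq_sym in xy; have [z rz] := in_arc (sc y x0) xy.
  have sz : forall x, s x = iter (findex s x0 x).+1 s x0.
    by move=> x; rewrite iterS iter_findex.
  have ex0 : x0 = s z by apply/eqP; rewrite -rE.
  have := fm z; rewrite leq_eqVlt => /orP[/eqP e|lt].
    by rewrite -e -sz -ex0.
  have := findex_iter (ltac:(rewrite ord; exact: lt) : _ < order s x0).
  by rewrite -sz -ex0 findex0.
have sz : forall x, s x = iter (findex s x0 x).+1 s x0.
  by move=> x; rewrite iterS iter_findex.
have fs : forall x, findex s x0 (s x) = (findex s x0 x).+1 %% m.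
  move=> x; have := fm x; rewrite leq_eqVlt => /orP[/eqP e|lt].
    by rewrite sz e itm findex0 modnn.
  by rewrite sz findex_iter ?ord // modn_small.
exists (fun y => Ordinal (fm y)); split.
  exists (fun i : 'I_m => iter i s x0) => [y|i] /=; first exact: iter_findex.
  by apply: val_inj => /=; rewrite findex_iter // ord.
move=> x y /=; rewrite rE -fs; apply/eqP/eqP => [->//|]; exact: finj.
Qed.

Lemma pairmap_traject (T : finType) (c : T -> T -> nat) (s : T -> T) x n :
  pairmap c x (traject s (s x) n) = map (fun v => c v (s v)) (traject s x n).
Proof. by elim: n x => [|n IH] x //=; rewrite IH. Qed.

Lemma cycle_props (T : finType) (r : rel T) m :
  3 <= m -> is_directed_cycle r m -> rc_eq r m /\ src_eq r m.
Proof.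
move=> m3 [f [hf hr]].
have hm : 0 < m by apply: leq_trans m3.
have [g fg gf] := hf.
pose s x := g (Ordinal (ltn_pmod (f x).+1 hm)).
have fs : forall x, val (f (s x)) = (f x).+1 %% m by move=> x; rewrite /s gf.
have rE : forall x y, r x y = (y == s x).
  by move=> x y; rewrite hr -(can_eq fg) -val_eqE fs.
have itE : forall k x, val (f (iter k s x)) = (f x + k) %% m.
  elim=> [|k IH] x /=; first by rewrite addn0 modn_small.
  by rewrite fs IH addnS; set a := f x + k; rewrite -addn1 modnDml addn1.
have itinj : forall i j x, iter i s x = iter j s x -> i %% m = j %% m.
  move=> i j x e; have := congr1 (fun v => val (f v)) e; rewrite /= !itE.
  by move/eqP; rewrite eqn_modDl => /eqP.
have un : forall x n, n <= m -> uniq (traject s x n).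
  move=> x [|n] // nm; rewrite looping_uniq; apply/negP => /trajectP[i lt e].
  have := itinj _ _ _ e; rewrite !modn_small // => [en|]; last exact: ltn_trans nm.
  by rewrite en ltnn in lt.
have itm : forall x, iter m s x = x.
  by move=> x; apply: (can_inj fg); apply: val_inj; rewrite /= itE modnDr modn_small.
have pE : forall x p, path r x p = fpath s x p.
  by move=> x p; apply: eq_path => a b; rewrite rE eq_sym.
have wE : forall x y q, dwalk r x y q ->
    q = traject s (s x) (size q) /\ iter (size q) s x = y.
  move=> x y q /andP[]; rewrite pE => /fpathP[n ->] /eqP <-.
  by rewrite size_traject last_traject.
have dE : forall x y p, dpath r x y p -> size p < m.
  move=> x y p /and3P[pp ly up]; have [e _] := wE x y p (introT andP (conj pp ly)).
  rewrite ltnNge; apply/negP => mp; move: up; rewrite /= e.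
  have -> : x \in traject s (s x) (size p).
    apply/trajectP; exists m.-1; first by rewrite prednK.
    rewrite -iterSr prednK //; apply: (can_inj fg); apply: val_inj; rewrite /= itE modnDr modn_small //.
  by [].
have dist : forall x y, exists2 k, k < m & iter k s x = y.
  move=> x y; exists ((f y + m - f x) %% m); first exact: ltn_pmod.
  apply: (can_inj fg); apply: val_inj; rewrite itE modnDmr addnBA; last first.
    by apply: leq_trans (ltnW (ltn_ord _)) (leq_addl _ _).
  by rewrite addKn modnDr modn_small.
have srcx : strongly_rainbow_connected r (fun x y => (f x).+1).
  move=> x y _; have [k km ek] := dist x y.
  exists (traject s (s x) k); split; first split.
  - rewrite /dpath pE fpath_traject last_traject ek eqxx /=.
    exact: (un x k.+1).
  - move=> q /wE[_ eq]; rewrite size_traject; rewrite -ek in eq.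
    by have := itinj _ _ _ eq; rewrite (modn_small km) => <-; exact: leq_mod.
  rewrite /rainbow /arc_colours pairmap_traject map_inj_uniq ?un ?(ltnW km) //.
  by move=> a b [] /val_inj /(can_inj fg).
have rcx : forall c, strongly_rainbow_connected r c -> rainbow_connected r c.
  move=> c h x y xy; have [p [[dp _] rp]] := h x y xy; exists p; by rewrite dp.
have col : colouring r m (fun x y => (f x).+1) by move=> x y _ /=.
have minim : forall k' c, k' < m -> colouring r k' c -> ~ rainbow_connected r c.
  move=> k' c lt cc rc.
  pose h v := c v (s v).
  have hr' : forall v, 0 < h v <= k' by move=> v; apply: cc; rewrite rE.
  have L : forall a b, a != b -> s b != a -> h a = h b -> False.
    move=> a b ab sba hab.
    have [p /andP[dp rp]] := rc a (s b) (ltac:(by rewrite eq_sym)).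
    have pm := dE _ _ _ dp.
    move: dp => /and3P[pp ly up].
    have [ep en] := wE a (s b) p (introT andP (conj pp ly)).
    have [k km ek] := dist a b.
    have k0 : 0 < k by move: ek ab; case: (k) => //= <-; rewrite eqxx.
    have km1 : k.+1 < m.
      rewrite ltn_neqAle km andbT; apply/negP => /eqP e.
      by move: sba; rewrite -ek -iterS e itm eqxx.
    have e2 : size p = k.+1.
      have := itinj (size p) k.+1 a (ltac:(by rewrite en iterS ek)).
      by rewrite !modn_small.
    move: rp; rewrite ep e2 /rainbow /arc_colours pairmap_traject /= => /andP[nin _].
    move/negP: nin; apply; rewrite (_ : c a (s a) = h b) //; apply: (map_f h); apply/trajectP.
    exists k.-1; first by rewrite prednK.
    by rewrite -iterSr prednK.
  have hinj : injective h.
    move=> a b hab; case: (eqVneq a b) => // ab; exfalso.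
    case: (eqVneq (s b) a) => [sba|sba]; last exact: L a b ab sba hab.
    apply: (L b a); [by rewrite eq_sym | | by []].
    apply/negP => /eqP saa.
    have := itinj 2 0 a (ltac:(by rewrite /= saa sba)).
    by rewrite !modn_small.
  have : uniq (map h (enum T)) by rewrite map_inj_uniq // enum_uniq.
  move/uniq_leq_size => /(_ (iota 1 k')) H.
  have : size (map h (enum T)) <= size (iota 1 k').
    apply: H => z /mapP[v _ ->]; rewrite mem_iota.
    by case/andP: (hr' v) => a b; rewrite a /= add1n ltnS.
  by rewrite size_map size_iota -cardT (bij_eq_card hf) card_ord leqNgt lt.
split; split.
- exists (fun x y => (f x).+1); split; [exact: col | exact: (rcx _ srcx)].
- exact: minim.
- exists (fun x y => (f x).+1); split; [exact: col | exact: srcx].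
- move=> k' c lt cc h; exact: (minim k' c lt cc (rcx c h)).
Qed.

Theorem corollary5 (T : finType) (r : rel T) (m : nat) :
  loopless r -> strongly_connected r -> num_arcs r = m -> 3 <= m ->
  (rc_eq r m /\ src_eq r m <-> is_directed_cycle r m).
Proof.
move=> _ sc na m3; split.
  by move=> [rc _]; apply: cycle_of => //; exact: rc_card rc.
by move=> h; exact: cycle_props.
Qed.
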